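(* A game $\mathcal{M}\subseteq\mathbb{N}_0$ (dimension $d=1$) is reflexive if and only if $\mathcal{M}=\mathcal{M}_k$ for some $k\in\mathbb{N}_0$, where $\mathcal{M}_0=\varnothing$ and, for $k\ge1$, with $p_k=3k-1$, $$\mathcal{M}_k=\{\,ip_k+j:\ i\in\mathbb{N}_0,\ k\le j\le 2k-1\,\}.$$
   Context: A one-heap game is a set $\mathcal{M}\subseteq\mathbb{N}_0$ of moves; from position $x\in\mathbb{N}_0$ one may move to $y\in\mathbb{N}_0$ iff $x-y\in\mathcal{M}$. Misère play: a player who cannot move wins. If $0\in\mathcal{M}$, $P(\mathcal{M})=\varnothing$. Otherwise: a position is an N-position if it has no option or some option is a P-position; otherwise it is a P-position; $P(\mathcal{M})$ denotes the set of P-positions. The game $\mathcal{M}$ is reflexive if $P(\mathcal{M})=\mathcal{M}$. *)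

(* Defs.v *)
From Stdlib Require Import Arith Lia.

(* A one-heap game: a set of moves M ⊆ N0. *)
Definition game := nat -> Prop.

(* Course-of-values computation of P-positions: [Pupto M n x] decides whether
   x is a P-position, for x < n, assuming 0 ∉ M (so every option of x is < x).
   Misère convention: x is an N-position iff it has no option or some option
   is a P-position; otherwise it is a P-position. *)
Fixpoint Pupto (M : game) (n : nat) : nat -> Prop :=
  match n with
  | 0 => fun _ => False
  | S n' => fun x =>
      if x <? n' then Pupto M n' x
      else x = n' /\
           (exists m, M m /\ m <= x) /\
           (forall m, M m -> m <= x -> ~ Pupto M n' (x - m))
  end.

(* x ∈ P(M); by convention P(M) = ∅ when 0 ∈ M. *)
Definition Ppos (M : game) (x : nat) : Prop :=
  ~ M 0 /\ Pupto M (S x) x.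

Definition reflexive (M : game) : Prop :=
  forall x, Ppos M x <-> M x.

Definition Mk (k : nat) : game :=
  fun x => 1 <= k /\ exists i j, k <= j <= 2 * k - 1 /\ x = i * (3 * k - 1) + j.

(* Main.v *)
Require Import Defs.
From Stdlib Require Import Arith Lia Classical Wf_nat.

Definition G (M : game) (x : nat) : Prop :=
  ~ M 0 /\ (exists m, M m /\ m <= x) /\ (forall m, M m -> m <= x -> ~ M (x - m)).
Definition FP (M : game) : Prop := forall x, M x <-> G M x.

Lemma Pupto_stable (M : game) : forall n y, y < n -> (Pupto M n y <-> Pupto M (S y) y).
Proof.
  induction n as [|n IH]; intros y Hy; [lia|].
  destruct (Nat.eq_dec y n) as [->|Hne]; [tauto|].
  simpl Pupto at 1. replace (y <? n) with true by (symmetry; apply Nat.ltb_lt; lia).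
  apply IH; lia.
Qed.

Lemma Ppos_char (M : game) : ~ M 0 -> forall x,
  Ppos M x <-> (exists m, M m /\ m <= x) /\ (forall m, M m -> m <= x -> ~ Ppos M (x - m)).
Proof.
  intros H0 x. unfold Ppos. simpl Pupto. rewrite Nat.ltb_irrefl.
  split.
  - intros [_ [_ [Hex Hall]]]. split; [exact Hex|].
    intros m Hm Hmx [_ Hp]. apply (Hall m Hm Hmx).
    assert (m <> 0) by (intro; subst; tauto).
    apply (Pupto_stable M x (x - m)); [lia|exact Hp].
  - intros [Hex Hall]. split; [exact H0|]. split; [reflexivity|]. split; [exact Hex|].
    intros m Hm Hmx Hp. apply (Hall m Hm Hmx). split; [exact H0|].
    assert (m <> 0) by (intro; subst; tauto).
    apply (Pupto_stable M x (x - m)); [lia|exact Hp].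
Qed.

Lemma FP_not0 (M : game) : FP M -> ~ M 0.
Proof. intros H H0. pose proof (proj1 (H 0) H0) as [h _]. exact (h H0). Qed.

Lemma refl_FP (M : game) : reflexive M -> FP M.
Proof.
  intros R.
  assert (H0 : ~ M 0) by (intro h; destruct (proj2 (R 0) h) as [a _]; exact (a h)).
  intro x. rewrite <- (R x). rewrite (Ppos_char M H0 x). unfold G.
  split.
  - intros [Hex Hall]. split; [exact H0|]. split; [exact Hex|].
    intros m Hm Hmx h. apply (Hall m Hm Hmx). apply R. exact h.
  - intros [_ [Hex Hall]]. split; [exact Hex|].
    intros m Hm Hmx h. apply (Hall m Hm Hmx). apply R. exact h.
Qed.

Lemma FP_refl (M : game) : FP M -> reflexive M.
Proof.
  intros F. pose proof (FP_not0 M F) as H0.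
  intro x. induction x as [x IH] using (well_founded_induction lt_wf).
  rewrite (Ppos_char M H0 x). rewrite (F x). unfold G.
  assert (E : forall m, M m -> m <= x -> (Ppos M (x - m) <-> M (x - m))).
  { intros m Hm Hmx. apply IH. assert (m <> 0) by (intro; subst; tauto). lia. }
  split.
  - intros [Hex Hall]. split; [exact H0|]. split; [exact Hex|].
    intros m Hm Hmx h. apply (Hall m Hm Hmx). apply E; auto.
  - intros [_ [Hex Hall]]. split; [exact Hex|].
    intros m Hm Hmx h. apply (Hall m Hm Hmx). apply E; auto.
Qed.

Lemma uniq_dir (M N : game) (a : nat) : FP M -> FP N -> M a ->
  (forall x, x <= a -> (M x <-> N x)) -> forall x, M x -> N x.
Proof.
  intros FM FN Ha Hle.
  assert (Hall : forall x, (M x <-> N x)).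
  2:{ intros x; apply Hall. }
  pose proof (FP_not0 M FM) as M0. pose proof (FP_not0 N FN) as N0.
  intro x. induction x as [x IH] using (well_founded_induction lt_wf).
  destruct (le_lt_dec x a) as [h|h]; [auto|].
  assert (Na : N a) by (apply Hle; auto).
  rewrite (FM x), (FN x). unfold G. split.
  - intros [_ [_ Hall]]. split; [exact N0|]. split; [exists a; split; [auto|lia]|].
    intros m Hm Hmx Hy.
    assert (m <> 0) by (intro; subst; tauto).
    assert (m <> x) by (intro; subst; rewrite Nat.sub_diag in Hy; tauto).
    apply (Hall m); [apply IH; [lia|auto]|lia|apply IH; [lia|auto]].
  - intros [_ [_ Hall]]. split; [exact M0|]. split; [exists a; split; [auto|lia]|].
    intros m Hm Hmx Hy.
    assert (m <> 0) by (intro; subst; tauto).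
    assert (m <> x) by (intro; subst; rewrite Nat.sub_diag in Hy; tauto).
    apply (Hall m); [apply IH; [lia|auto]|lia|apply IH; [lia|auto]].
Qed.

Lemma least (M : game) : (exists a, M a) -> exists a, M a /\ forall y, y < a -> ~ M y.
Proof.
  intros [a Ha]. revert Ha. induction a as [a IH] using (well_founded_induction lt_wf).
  intro Ha. destruct (classic (exists y, y < a /\ M y)) as [[y [h1 h2]]|hn].
  - exact (IH y h1 h2).
  - exists a. split; auto. intros y hy hm. apply hn; eauto.
Qed.

Lemma Mk_mod (k x : nat) : 1 <= k ->
  (Mk k x <-> k <= x mod (3*k-1) <= 2*k-1).
Proof.
  intros Hk. unfold Mk. split.
  - intros [_ [i [j [hj ->]]]].
    rewrite <- (Nat.mod_unique (i*(3*k-1)+j) (3*k-1) i j); [lia|lia|lia].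
  - intros h. split; [exact Hk|]. exists (x / (3*k-1)), (x mod (3*k-1)).
    split; [exact h|]. pose proof (Nat.div_mod_eq x (3*k-1)). lia.
Qed.

Lemma Mk_ge (k x : nat) : Mk k x -> k <= x.
Proof. intros [_ [i [j [hj ->]]]]. nia. Qed.

Lemma Mk_sum (k m y : nat) : Mk k m -> Mk k y -> ~ Mk k (m + y).
Proof.
  intros [Hk [i1 [j1 [h1 ->]]]] [_ [i2 [j2 [h2 ->]]]].
  rewrite (Mk_mod k _ Hk).
  destruct (lt_dec (j1 + j2) (3*k-1)) as [hl|hl].
  - rewrite <- (Nat.mod_unique (i1 * (3 * k - 1) + j1 + (i2 * (3 * k - 1) + j2)) (3*k-1)
       (i1+i2) (j1+j2)); [lia|lia|nia].
  - rewrite <- (Nat.mod_unique (i1 * (3 * k - 1) + j1 + (i2 * (3 * k - 1) + j2)) (3*k-1)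
       (i1+i2+1) (j1+j2-(3*k-1))); [lia|lia|nia].
Qed.

Lemma Mk_FP (k : nat) : FP (Mk k).
Proof.
  intro x. unfold G.
  assert (N0 : ~ Mk k 0) by (intro h; pose proof (Mk_ge k 0 h); destruct h as [hk _]; lia).
  split.
  - intro Hx. split; [exact N0|]. split; [exists x; auto|].
    intros m Hm Hmx Hy. apply (Mk_sum k m (x - m) Hm Hy).
    replace (m + (x - m)) with x by lia. exact Hx.
  - intros [_ [[m0 [Hm0 Hm0x]] Hall]].
    destruct (classic (Mk k x)) as [h|Hn]; [exact h|exfalso].
    pose proof (Mk_ge k m0 Hm0) as g0.
    assert (Hk : 1 <= k) by (destruct Hm0; auto).
    set (p := 3*k-1) in *.
    pose proof (Nat.div_mod_eq x p) as Hd.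
    assert (Hp : p <> 0) by (unfold p; lia).
    pose proof (Nat.mod_upper_bound x p Hp) as Hr.
    rewrite (Mk_mod k x Hk) in Hn. fold p in Hn.
    set (q := x / p) in *. set (r := x mod p) in *.
    destruct (le_lt_dec (2*k) r) as [hr|hr].
    + apply (Hall (q*p + (r - k))).
      * split; [exact Hk|]. exists q, (r-k). split; [unfold p in *; lia|reflexivity].
      * lia.
      * split; [exact Hk|]. exists 0, k. split; [lia|]. lia.
    + assert (hr2 : r < k) by lia.
      destruct q as [|q'].
      * lia.
      * apply (Hall (q'*p + (2*k-1))).
        -- split; [exact Hk|]. exists q', (2*k-1). split; [lia|reflexivity].
        -- nia.
        -- split; [exact Hk|]. exists 0, (k + r). split; [lia|]. unfold p in *. nia.
Qed.

Theorem theorem6 (M : game) :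
  reflexive M <-> exists k : nat, forall x : nat, M x <-> Mk k x.
Proof.
  split.
  - intro R. pose proof (refl_FP M R) as F. pose proof (FP_not0 M F) as M0.
    destruct (classic (exists a, M a)) as [He|Hn].
    + destruct (least M He) as [a [Ha Hmin]].
      assert (a <> 0) by (intro; subst; tauto).
      exists a.
      assert (Hle : forall x, x <= a -> (M x <-> Mk a x)).
      { intros x hx. destruct (Nat.eq_dec x a) as [->|hne].
        - split; intros _; [|exact Ha]. split; [lia|]. exists 0, a. split; lia.
        - split; intro h; [exfalso; apply (Hmin x); [lia|auto]|].
          apply Mk_ge in h. lia. }
      intro x. split.
      * apply (uniq_dir M (Mk a) a F (Mk_FP a) Ha Hle).
      * apply (uniq_dir (Mk a) M a (Mk_FP a) F).
        -- apply Hle; auto.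
        -- intros y hy. symmetry. apply Hle; auto.
    + exists 0. intro x. split; intro h.
      * exfalso; eauto.
      * destruct h; lia.
  - intros [k Hk]. apply FP_refl. intro x. rewrite (Hk x). rewrite (Mk_FP k x).
    unfold G. split.
    + intros [a [[m [b c]] d]]. split; [rewrite Hk; auto|]. split.
      * exists m; rewrite Hk; auto.
      * intros m' hm hmx. rewrite !Hk. apply d; auto. apply Hk; auto.
    + intros [a [[m [b c]] d]]. split; [rewrite <- Hk; auto|]. split.
      * exists m; rewrite <- Hk; auto.
      * intros m' hm hmx. rewrite <- !Hk. apply d; auto. apply Hk; auto.
Qed.
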